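(* Let $\xi\in\mathbb{F}_q((T^{-1}))\setminus\mathbb{F}_q(T)$. Assume that there exists a sequence $(\alpha_j)_{j\ge1}$ such that for every $j\ge1$, $\alpha_j\in\overline{\mathbb{F}_q(T)}$ is quadratic with $\alpha_j\ne\alpha_j'$ and $\xi\ne\alpha_j$, and $(H(\alpha_j))_{j\ge1}$ is a divergent increasing sequence. If the limits \[ \gamma_1:=\lim_{j\to\infty}\frac{-\log|\xi-\alpha_j|}{\log H(\alpha_j)},\qquad \gamma_2:=\lim_{j\to\infty}\frac{-\log|\alpha_j-\alpha_j'|}{\log H(\alpha_j)} \] exist, then $w_2^*(\xi)\ge\gamma_1-1$ and $w_2(\xi)\ge\gamma_1+\gamma_2-1$.
   Context: $\mathbb{F}_q((T^{-1}))$ is the field of Laurent series over $\mathbb{F}_q$ with absolute value $|\xi|=q^{-N}$ for $\xi=\sum_{j\ge N}a_jT^{-j}$, $a_N\ne0$, $|0|=0$, extended uniquely to an algebraic closure. For a quadratic $\alpha\in\overline{\mathbb{F}_q(T)}$, $\alpha'$ denotes its Galois conjugate distinct from $\alpha$ if $\alpha$ is separable, and $\alpha':=\alpha$ if it is inseparable. The height $H(P)$ of $P\in(\mathbb{F}_q[T])[X]$ is the maximum absolute value of its coefficients; $H(\alpha)$ is the height of the minimal polynomial of $\alpha$ (the unique non-constant irreducible primitive polynomial in $(\mathbb{F}_q[T])[X]$ with leading coefficient monic in $T$ vanishing at $\alpha$). $w_2(\xi)$ is the supremum of real $w$ with $0<|P(\xi)|\le H(P)^{-w}$ for infinitely many $P\in(\mathbb{F}_q[T])[X]$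 of degree $\le2$, and $w_2^*(\xi)$ is the supremum of real $w^*$ with $0<|\xi-\alpha|\le H(\alpha)^{-w^*-1}$ for infinitely many algebraic $\alpha$ of degree $\le2$. *)

(* Defs.v *)
From HB Require Import structures.
From mathcomp Require Import all_boot all_order all_algebra.
From mathcomp Require Import all_classical all_reals all_analysis.
Set Implicit Arguments. Unset Strict Implicit. Unset Printing Implicit Defensive.
Import Order.TTheory GRing.Theory Num.Theory.
Local Open Scope ring_scope.
Local Open Scope classical_set_scope.

(* F is the finite field F_q (q = #|F|).  L is an algebraically
   closed field, iF : F -> L the embedding of constants, t : L the image of
   the indeterminate T (assumed transcendental), and absv : L -> R a
   non-archimedean absolute value with |c| = 1 for c in F^*, |t| = q; its
   restriction to F_q(T) is the T^{-1}-adic absolute value of the paper.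
   F_q((T^{-1})) is realized as the closure of F_q(t) in L. *)

Section Defs.
Variables (F : finFieldType) (L : closedFieldType) (R : realType).
Variables (iF : {rmorphism F -> L}) (t : L) (absv : L -> R).

Definition evT (p : {poly F}) : L := (map_poly iF p).[t].

Definition evP (P : {poly {poly F}}) (x : L) : L := (map_poly evT P).[x].

Definition is_abs_value : Prop :=
  [/\ forall x, 0 <= absv x,
      forall x, absv x = 0 <-> x = 0,
      forall x y, absv (x * y) = absv x * absv y,
      forall x y, absv (x + y) <= Num.max (absv x) (absv y)
    & (forall c : F, c != 0 -> absv (iF c) = 1) /\ absv t = (#|F|%:R : R)].

Definition transcendental_T : Prop := forall p : {poly F}, evT p = 0 -> p = 0.

Definition in_FqT (x : L) : Prop :=
  exists p s : {poly F}, s != 0 /\ x = evT p / evT s.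

Definition in_Laurent (x : L) : Prop :=
  forall e : R, 0 < e -> exists p s : {poly F},
    s != 0 /\ absv (x - evT p / evT s) < e.

Definition absT (p : {poly F}) : R :=
  if p == 0 then 0 else (#|F|%:R : R) ^+ (size p).-1.

Definition height (P : {poly {poly F}}) : R :=
  \big[Num.max/0]_(i < size P) absT P`_i.

Definition primitive (P : {poly {poly F}}) : Prop :=
  forall d : {poly F}, (forall i, d %| P`_i) -> size d = 1%N.

Definition irreducible_elt (P : {poly {poly F}}) : Prop :=
  [/\ P != 0, ~~ (P \is a GRing.unit)
    & forall A B : {poly {poly F}}, P = A * B ->
        A \is a GRing.unit \/ B \is a GRing.unit].

Definition is_minpoly (alpha : L) (P : {poly {poly F}}) : Prop :=
  [/\ (1 < size P)%N, irreducible_elt P, primitive P,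
      lead_coef P \is monic & evP P alpha = 0].

Definition w2 (xi : L) : \bar R :=
  ereal_sup [set w%:E | w in [set w : R |
    ~ finite_set [set P : {poly {poly F}} | (size P <= 3)%N /\
        0 < absv (evP P xi) /\ absv (evP P xi) <= height P `^ (- w)]]].

Definition w2star (xi : L) : \bar R :=
  ereal_sup [set w%:E | w in [set w : R |
    ~ finite_set [set alpha : L | exists P, is_minpoly alpha P /\
        (size P <= 3)%N /\
        0 < absv (xi - alpha) /\ absv (xi - alpha) <= height P `^ (- w - 1)]]].

End Defs.

Arguments absT {F R} p.
Arguments height {F R} P.

(* Main.v *)
Require Import Defs.
From HB Require Import structures.
From mathcomp Require Import all_boot all_order all_algebra.
From mathcomp Require Import all_classical all_reals all_analysis.
From mathcomp Require Import ring lra finmap zify.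
Import Order.TTheory GRing.Theory Num.Theory numFieldNormedType.Exports.
Local Open Scope ring_scope.
Local Open Scope classical_set_scope.
Section Basics.
Variables (F : finFieldType) (L : closedFieldType) (R : realType).
Variables (iF : {rmorphism F -> L}) (t : L) (absv : L -> R).
Hypothesis habs : is_abs_value iF t absv.
Hypothesis htr : transcendental_T iF t.

Local Notation q := (#|F|%:R : R).
Local Notation evT := (evT iF t).

Lemma q_gt1 : 1 < q.
Proof. by rewrite ltr1n card_finNzRing_gt1. Qed.
Lemma q_gt0 : 0 < q.
Proof. exact: lt_trans ltr01 q_gt1. Qed.

Lemma abs_ge0 x : 0 <= absv x.
Proof. by case: habs. Qed.
Lemma abs_eq0 x : absv x = 0 <-> x = 0.
Proof. by case: habs. Qed.
Lemma abs_gt0 {x} : x != 0 -> 0 < absv x.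
Proof. move=> hx; rewrite lt_neqAle abs_ge0 andbT eq_sym; apply/eqP => /abs_eq0 h; by rewrite h eqxx in hx. Qed.
Lemma absM x y : absv (x * y) = absv x * absv y.
Proof. by case: habs. Qed.
Lemma abs_ultra x y : absv (x + y) <= Num.max (absv x) (absv y).
Proof. by case: habs. Qed.
Lemma abs_iF c : c != 0 -> absv (iF c) = 1.
Proof. by have := habs; rewrite /is_abs_value => -[_ _ _ _ [h _]]; apply: h. Qed.
Lemma abs_t : absv t = q.
Proof. by have := habs; rewrite /is_abs_value => -[_ _ _ _ [_ h]]. Qed.
Lemma abs0 : absv 0 = 0.
Proof. exact/abs_eq0. Qed.
Lemma abs1 : absv 1 = 1.
Proof.
have h := absM 1 1; rewrite mulr1 in h.
have h1 : absv 1 != 0 by apply/eqP => /abs_eq0/eqP; rewrite oner_eq0.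
by apply: (mulfI h1); rewrite -h mulr1.
Qed.
Lemma absN1 : absv (-1) = 1.
Proof.
have h := absM (-1) (-1); rewrite mulrNN mulr1 abs1 in h.
have h0 := abs_ge0 (-1).
have : (absv (-1) - 1) * (absv (-1) + 1) = 0.
  have -> : (absv (-1) - 1) * (absv (-1) + 1) = absv (-1) * absv (-1) - 1 by ring.
  by rewrite -h subrr.
move/eqP; rewrite mulf_eq0 => /orP[]; first by rewrite subr_eq0 => /eqP.
move=> /eqP h2; exfalso; lra.
Qed.
Lemma absN x : absv (- x) = absv x.
Proof. by rewrite -mulN1r absM absN1 mul1r. Qed.
Lemma absB x y : absv (x - y) = absv (y - x).
Proof. by rewrite -absN opprB. Qed.
Lemma absV x : absv (x^-1) = (absv x)^-1.
Proof.
have [->|hx] := eqVneq x 0; first by rewrite invr0 abs0 invr0.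
have h := absM x x^-1; rewrite mulfV // abs1 in h.
have hx' : absv x != 0 by rewrite gt_eqF // abs_gt0.
by apply: (mulfI hx'); rewrite -h mulfV.
Qed.
Lemma absX x n : absv (x ^+ n) = absv x ^+ n.
Proof. by elim: n => [|n IH]; rewrite ?expr0 ?abs1 // !exprS absM IH. Qed.
Lemma abs_le_add x y e : absv x <= e -> absv y <= e -> absv (x + y) <= e.
Proof. move=> h1 h2; apply: le_trans (abs_ultra x y) _; by rewrite ge_max h1 h2. Qed.
Lemma abs_lt_add x y e : absv x < e -> absv y < e -> absv (x + y) < e.
Proof. move=> h1 h2; apply: le_lt_trans (abs_ultra x y) _; by rewrite gt_max h1 h2. Qed.
Lemma abs_strict x y : absv x < absv y -> absv (x + y) = absv y.
Proof.
move=> h; apply/eqP; rewrite eq_le; apply/andP; split.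
  by apply: abs_le_add => //; apply: ltW.
rewrite leNgt; apply/negP => h2.
have : absv ((x + y) + - x) < absv y by apply: abs_lt_add; rewrite // absN.
by rewrite addrC addKr ltxx.
Qed.
Lemma t_neq0 : t != 0.
Proof. by apply/eqP => ht; have := abs_t; rewrite ht abs0 => /eqP; rewrite eq_sym gt_eqF // q_gt0. Qed.

Lemma evTE p : evT p = (map_poly iF p).[t].
Proof. by []. Qed.
Lemma evTD p r : evT (p + r) = evT p + evT r.
Proof. by rewrite !evTE rmorphD hornerD. Qed.
Lemma evTN p : evT (- p) = - evT p.
Proof. by rewrite !evTE rmorphN hornerN. Qed.
Lemma evTB p r : evT (p - r) = evT p - evT r.
Proof. by rewrite evTD evTN. Qed.
Lemma evTM p r : evT (p * r) = evT p * evT r.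
Proof. by rewrite !evTE rmorphM hornerM. Qed.
Lemma evTC c : evT c%:P = iF c.
Proof. by rewrite evTE map_polyC hornerC. Qed.
Lemma evT0 : evT 0 = 0.
Proof. by rewrite -[0]/(0%:P) evTC rmorph0. Qed.
Lemma evT1 : evT 1 = 1.
Proof. by rewrite -[1]/(1%:P) evTC rmorph1. Qed.
Lemma evTX : evT 'X = t.
Proof. by rewrite evTE map_polyX hornerX. Qed.
Lemma evTXn n : evT 'X^n = t ^+ n.
Proof. by rewrite evTE map_polyXn hornerXn. Qed.
Lemma evT_coef p : evT p = \sum_(i < size p) iF p`_i * t ^+ i.
Proof.
rewrite evTE horner_coef size_map_poly; apply: eq_bigr => i _.
by rewrite coef_map.
Qed.
Lemma evT_inj p r : evT p = evT r -> p = r.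
Proof. by move=> h; apply/eqP; rewrite -subr_eq0; apply/eqP/htr; rewrite evTB h subrr. Qed.
Lemma evT_neq0 {p} : p != 0 -> evT p != 0.
Proof. by move=> hp; apply/eqP => h; move/eqP: hp; apply; apply: htr. Qed.

Lemma abs_term c i : absv (iF c * t ^+ i) <= q ^+ i.
Proof.
rewrite absM absX abs_t; have [->|hc] := eqVneq c 0.
  by rewrite rmorph0 abs0 mul0r exprn_ge0 // ltW // q_gt0.
by rewrite abs_iF // mul1r.
Qed.
Lemma abs_sum_lt n (c : nat -> F) : absv (\sum_(i < n) iF (c i) * t ^+ i) < q ^+ n.
Proof.
elim: n => [|n IH]; first by rewrite big_ord0 abs0 expr0 ltr01.
rewrite big_ord_recr /=; apply: (@le_lt_trans _ _ (q ^+ n)).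
  by apply: abs_le_add; [apply: ltW | apply: abs_term].
by rewrite exprS ltr_pMl ?exprn_gt0 ?q_gt0 // q_gt1.
Qed.
Lemma abs_evT p : absv (evT p) = absT p.
Proof.
rewrite /absT; have [->|hp] := eqVneq p 0; first by rewrite evT0 abs0.
rewrite evT_coef; have := hp; rewrite -size_poly_eq0.
case hs: (size p) => [//|n] _.
have hl : p`_n != 0 by rewrite -[n]/((n.+1).-1) -hs -lead_coefE lead_coef_eq0.
rewrite big_ord_recr /= abs_strict //=.
  by rewrite absM absX abs_t abs_iF ?mul1r.
by rewrite absM absX abs_t abs_iF ?mul1r ?abs_sum_lt.
Qed.
Lemma absT_ge1 {p : {poly F}} : p != 0 -> 1 <= absT (R:=R) p.
Proof. by move=> hp; rewrite /absT (negPf hp) exprn_ege1 // ltW // q_gt1. Qed.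
Lemma absT_ge0 (p : {poly F}) : 0 <= absT (R:=R) p.
Proof. rewrite /absT; case: ifP => // _; by rewrite exprn_ge0 // ltW // q_gt0. Qed.


Lemma height_ge0 (P : {poly {poly F}}) : 0 <= height (R:=R) P.
Proof. rewrite /height; apply: (big_ind (fun x => 0 <= x)) => //; last by move=> i _; apply: absT_ge0.
by move=> x y hx hy; rewrite le_max hx. Qed.

Lemma coef_le_height (P : {poly {poly F}}) i : absT (R:=R) P`_i <= height P.
Proof.
have [hi|hi] := ltnP i (size P); last first.
  by rewrite nth_default // /absT eqxx height_ge0.
by rewrite /height (bigD1 (Ordinal hi)) //= le_max lexx.
Qed.

Lemma height_le (P : {poly {poly F}}) (M : R) : 0 <= M -> (forall i, absT P`_i <= M) -> height P <= M.
Proof.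
move=> hM h; rewrite /height; apply: (big_ind (fun x => x <= M)) => // x y hx hy.
by rewrite ge_max hx hy.
Qed.

Lemma Laurent_affine x (a b : {poly F}) : in_Laurent iF t absv x -> in_Laurent iF t absv (evT a * x + evT b).
Proof.
move=> hx e he.
have [->|ha] := eqVneq a 0.
  exists b, 1; split; first exact: oner_neq0.
  by rewrite evT0 mul0r add0r evT1 divr1 subrr abs0.
have hA : 0 < absT (R:=R) a by have := absT_ge1 ha; lra.
have [p [s [hs hps]]] := hx (e / absT a) (divr_gt0 he hA).
exists (a * p + b * s), s; split => //.
have hs' := evT_neq0 hs.
have -> : evT a * x + evT b - evT (a * p + b * s) / evT s = evT a * (x - evT p / evT s).
  by rewrite evTD !evTM; field.
by rewrite absM abs_evT mulrC -ltr_pdivlMr.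
Qed.

Lemma floor_ex x : in_Laurent iF t absv x -> exists f, absv (x - evT f) < 1.
Proof.
move=> hx; have [u [v [hv huv]]] := hx 1 ltr01.
exists (u %/ v).
have hv' := evT_neq0 hv.
have -> : x - evT (u %/ v) = (x - evT u / evT v) + evT (u %% v) / evT v.
  by rewrite {2}(divp_eq u v) evTD evTM; field.
apply: abs_lt_add => //.
rewrite absM absV !abs_evT.
have hvA : 0 < absT (R:=R) v by have := absT_ge1 hv; lra.
rewrite ltr_pdivrMr // mul1r /absT (negPf hv).
case: eqP => [_|hr]; first by rewrite exprn_gt0 // q_gt0.
rewrite ltr_eXn2l ?q_gt1 //.
have := ltn_modp u v; rewrite hv => hlt.
have h1 : (0 < size (u %% v)%R)%N by rewrite size_poly_gt0; apply/eqP.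
by rewrite -ltnS !prednK // (leq_trans h1 (ltnW hlt)).
Qed.

Lemma infinite_by (T : choiceType) (S : set T) (g : T -> R) :
  (forall x, S x -> 0 < g x) -> (forall e, 0 < e -> exists x, S x /\ g x < e) -> ~ finite_set S.
Proof.
move=> hpos hsmall /finite_fsetP [X hX].
pose m := \big[Num.min/1]_(y <- finmap.enum_fset X) g y.
have hm : 0 < m.
  rewrite /m big_seq; apply: (big_ind (fun x => 0 < x)) => //.
    by move=> a b ha hb; rewrite lt_min ha.
  by move=> y hy; apply: hpos; rewrite hX.
have [x [hSx hgx]] := hsmall m hm.
have hxX : x \in finmap.enum_fset X by move: hSx; rewrite hX.
suff : m <= g x by rewrite leNgt hgx.
rewrite /m; elim: (finmap.enum_fset X) hxX => [|a s IH] //.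
rewrite in_cons big_cons => /orP[/eqP <-|hs].
  by rewrite ge_min lexx.
by rewrite ge_min IH ?orbT.
Qed.

Lemma sup_ge (r : R) (A : set R) (w0 : R) : w0 < r -> (forall w, w0 < w -> w < r -> A w) ->
  (r%:E <= ereal_sup [set w%:E | w in A])%E.
Proof.
move=> h0 hA; apply/lee_addgt0Pr => e he.
pose w := Num.max ((w0 + r) / 2) (r - e / 2).
have hw1 : w0 < w by rewrite lt_max; apply/orP; left; lra.
have hw2 : w < r by rewrite gt_max; apply/andP; split; lra.
have hw3 : r <= w + e.
  have : r - e / 2 <= w by rewrite le_max lexx orbT.
  lra.
apply: (@le_trans _ _ (w%:E + e%:E)%E); first by rewrite -EFinD lee_fin.
apply: leeD2r; apply: ereal_sup_ubound; exists w => //; exact: hA.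
Qed.


Lemma evP_expand (P : {poly {poly F}}) x : (size P <= 3)%N ->
  evP iF t P x = evT P`_0 + evT P`_1 * x + evT P`_2 * x ^+ 2.
Proof.
move=> hs; rewrite /evP (horner_coef_wide (n:=3)); last first.
  by apply: leq_trans hs; exact: size_poly.
by rewrite !big_ord_recr big_ord0 /= !coef_map_id0 ?evT0 // expr0 expr1 mulr1 add0r.
Qed.

Lemma vieta (A B C al al' : L) : al != al' ->
  C + B * al + A * al ^+ 2 = 0 -> C + B * al' + A * al' ^+ 2 = 0 ->
  B = - (A * (al + al')) /\ C = A * al * al'.
Proof.
move=> hne e1 e2.
have h : (al - al') * (B + A * (al + al')) = 0.
  have -> : (al - al') * (B + A * (al + al')) =
    (C + B * al + A * al ^+ 2) - (C + B * al' + A * al' ^+ 2) by ring.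
  by rewrite e1 e2 subrr.
move/eqP: h; rewrite mulf_eq0 subr_eq0 (negPf hne) /= addr_eq0 => /eqP hB.
split => //.
have -> : C = (C + B * al + A * al ^+ 2) - B * al - A * al ^+ 2 by ring.
by rewrite e1 hB; ring.
Qed.

Lemma lin_irred (P : {poly {poly F}}) : size P = 2%N -> primitive P -> irreducible_elt P.
Proof.
move=> hs hp; split.
- by rewrite -size_poly_eq0 hs.
- by rewrite poly_unitE hs.
move=> A B hAB.
have hA : A != 0 by apply/eqP => hA; move: hs; rewrite hAB hA mul0r size_poly0.
have hB : B != 0 by apply/eqP => hB; move: hs; rewrite hAB hB mulr0 size_poly0.
have hsz := size_mul hA hB; rewrite -hAB hs in hsz.
have hA1 : (0 < size A)%N by rewrite size_poly_gt0.
have hB1 : (0 < size B)%N by rewrite size_poly_gt0.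
have [hsA|hsA] := eqVneq (size A) 1%N.
  left; rewrite poly_unitE hsA /=.
  have [c hc] : exists c, A = c%:P by exists A`_0; exact: size1_polyC (eq_leq hsA).
  have : size c = 1%N.
    by apply: hp => i; rewrite hAB hc coefCM; apply: dvdp_mulr; apply: dvdpp.
  move=> h1; rewrite hc coefC /= poly_unitE h1 /= unitfE.
  by have := lead_coef_eq0 c; rewrite lead_coefE h1 /= -size_poly_eq0 h1 => ->.
have hsB : size B = 1%N.
  move/eqP: hsA => hsA.
  have h3 : (size A + size B = 3)%N by rewrite -[LHS]prednK -?hsz // addn_gt0 hA1.
  lia.
right; rewrite poly_unitE hsB /=.
have [c hc] : exists c, B = c%:P by exists B`_0; exact: size1_polyC (eq_leq hsB).
have : size c = 1%N.
  by apply: hp => i; rewrite hAB hc coefMC; apply: dvdp_mull; apply: dvdpp.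
move=> h1; rewrite hc coefC /= poly_unitE h1 /= unitfE.
by have := lead_coef_eq0 c; rewrite lead_coefE h1 /= -size_poly_eq0 h1 => ->.
Qed.

Lemma infinite_by2 (T : choiceType) (S : set T) (g : T -> R) :
  (forall e, 0 < e -> exists x, S x /\ 0 < g x /\ g x < e) -> ~ finite_set S.
Proof.
move=> h hfin.
have : ~ finite_set [set x | S x /\ 0 < g x].
  apply: (@infinite_by _ _ g); first by move=> x [].
  by move=> e he; have [x [h1 [h2 h3]]] := h e he; exists x.
by apply; apply: sub_finite_set hfin => x [].
Qed.

Lemma powRE (H x : R) : 0 < H -> H `^ x = expR (x * ln H).
Proof. by move=> hH; rewrite /powR gt_eqF. Qed.

Lemma small_pow (c e : R) : 0 < c -> 0 < e -> exists M, 0 < M /\ forall H, M < H -> H `^ (- c) < e.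
Proof.
move=> hc he; exists (expR (- ln e / c)); split; first exact: expR_gt0.
move=> H hH; have hH0 : 0 < H by apply: lt_trans hH; exact: expR_gt0.
rewrite powRE // -[e]lnK ?posrE // ltr_expR.
have : - ln e / c < ln H.
  by rewrite -[X in X < _]expRK ltr_ln ?posrE ?expR_gt0.
rewrite ltr_pdivrMr // mulrC => h; rewrite mulNr; lra.
Qed.

Lemma nat_le_qexp k : k%:R <= q ^+ k.
Proof.
elim: k => [|k IH]; first by rewrite expr0 ler01.
have h1 : 1 <= q ^+ k by rewrite exprn_ege1 // ltW // q_gt1.
have h2 : 2 <= q by rewrite ler_nat card_finNzRing_gt1.
have h3 : 0 <= (q - 2) * q ^+ k by apply: mulr_ge0; lra.
rewrite exprS -natr1; nra.
Qed.

Lemma qexp_small e : 0 < e -> exists k, (q ^+ k)^-1 < e.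
Proof.
move=> he; have [k hk] : exists k : nat, e^-1 < k%:R.
  exists (Num.truncn e^-1).+1; apply: real_truncnS_gt; exact: num_real.
exists k; have hq : 0 < q ^+ k by rewrite exprn_gt0 // q_gt0.
rewrite -(ltf_pV2 (x:=e)) ?posrE ?invr_gt0 // invrK.
exact: lt_le_trans hk (nat_le_qexp k).
Qed.


Lemma powR_ge1 (H x : R) : 1 <= H -> 0 <= x -> 1 <= H `^ x.
Proof.
move=> hH hx; rewrite powRE; last by lra.
rewrite -expR0 ler_expR; apply: mulr_ge0 => //; exact: ln_ge0.
Qed.

Lemma linP_coef (c1 c0 : {poly F}) :
  let P := c1%:P * 'X + c0%:P in
  [/\ P`_0 = c0, P`_1 = c1 & forall i, (2 <= i)%N -> P`_i = 0].
Proof.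
split; rewrite ?coefD ?coefMX ?coefC /=.
- by rewrite add0r.
- by rewrite addr0.
move=> [|[|i]] // _; rewrite coefD coefMX coefC /=.
by rewrite add0r coefC.
Qed.

Lemma linP_size (c1 c0 : {poly F}) : c1 != 0 -> size (c1%:P * 'X + c0%:P) = 2%N.
Proof. by move=> h; rewrite size_MXaddC polyC_eq0 (negPf h) /= size_polyC h. Qed.

Lemma linP_minpoly (c1 c0 : {poly F}) al :
  c1 \is monic -> (forall d, d %| c0 -> d %| c1 -> size d = 1%N) ->
  evT c1 * al + evT c0 = 0 ->
  is_minpoly iF t al (c1%:P * 'X + c0%:P).
Proof.
move=> hm hcop hev.
have hc1 : c1 != 0 by exact: monic_neq0.
have hs := @linP_size c1 c0 hc1.
have [h0 h1 h2] := linP_coef c1 c0.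
have hprim : primitive (c1%:P * 'X + c0%:P).
  by move=> d hd; apply: hcop; [rewrite -h0 | rewrite -h1]; apply: hd.
split => //; first by rewrite hs.
- exact: lin_irred.
- by rewrite lead_coefE hs /= h1.
- rewrite evP_expand ?hs // h0 h1 h2 // evT0 mul0r addr0; by rewrite addrC.
Qed.

Lemma w2star_ge_m1 xi : in_Laurent iF t absv xi -> ~ in_FqT iF t xi ->
  ((-1)%:E <= w2star iF t absv xi)%E.
Proof.
move=> hL hQ; have [f hf] := floor_ex _ hL.
rewrite /w2star; apply: (@sup_ge (-1) _ (-2)); first by lra.
move=> w hw0 hw1.
apply: (@infinite_by2 _ _ (fun a => absv (a - evT f))) => e he.
have [k hk] := qexp_small _ he.
have htk : t ^+ k != 0 by rewrite expf_neq0 // t_neq0.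
have hqk : absv ((t ^+ k)^-1) = (q ^+ k)^-1 by rewrite absV absX abs_t.
have hqk0 : 0 < q ^+ k by rewrite exprn_gt0 // q_gt0.
exists (evT f + (t ^+ k)^-1); split; last first.
  by rewrite addrC addKr hqk; split => //; rewrite invr_gt0.
pose c1 : {poly F} := 'X^k.
pose c0 : {poly F} := - (f * 'X^k + 1).
have hev1 : evT c1 = t ^+ k by rewrite /c1 evTXn.
have hev0 : evT c0 = - (evT f * t ^+ k + 1) by rewrite /c0 evTN evTD evTM evTXn evT1.
exists (c1%:P * 'X + c0%:P); split.
- apply: linP_minpoly; first exact: monicXn.
  + move=> d hd0 hd1; apply/eqP; rewrite -dvdp1.
    have : d %| f * 'X^k by apply: dvdp_mull.
    move/dvdp_addr => <-; by rewrite -dvdpNr.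
  + by rewrite hev1 hev0; field.
split; first by rewrite linP_size ?monic_neq0 ?monicXn.
have hne : xi != evT f + (t ^+ k)^-1.
  apply/eqP => hx; apply: hQ; exists (f * 'X^k + 1), 'X^k; split.
    exact: monic_neq0 (monicXn _ k).
  by rewrite hx evTD evTM evTXn evT1; field.
split; first by apply: abs_gt0; rewrite subr_eq0.
apply: (@le_trans _ _ 1).
  rewrite opprD addrA; apply: abs_le_add; first exact: ltW.
  rewrite absN hqk invf_le1 //; by rewrite exprn_ege1 // ltW // q_gt1.
apply: powR_ge1; last by lra.
have := coef_le_height (c1%:P * 'X + c0%:P) 1.
have [_ -> _] := linP_coef c1 c0.
by move/(le_trans (absT_ge1 (monic_neq0 (monicXn _ k)))).
Qed.


Lemma absT_le_size (p : {poly F}) n : (size p <= n.+1)%N -> absT p <= q ^+ n.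
Proof.
move=> hs; rewrite /absT; case: eqP => _; first by rewrite exprn_ge0 // ltW // q_gt0.
rewrite ler_eXn2l ?q_gt1 //; move: hs; rewrite -!subn1; lia.
Qed.

Lemma dirichlet xi N : in_Laurent iF t absv xi -> ~ in_FqT iF t xi ->
  exists s p : {poly F}, [/\ s != 0, absT s <= q ^+ N,
     absT p <= q ^+ N * Num.max 1 (absv xi),
     0 < absv (evT s * xi - evT p) & absv (evT s * xi - evT p) < (q ^+ N)^-1].
Proof.
move=> hL hQ.
pose sp (r : 'rV[F]_N.+1) : {poly F} := \poly_(i < N.+1) r ord0 (inord i).
have hfl1 : forall r, exists p, absv (evT (sp r) * xi - evT p) < 1.
  move=> r; apply: floor_ex; have := @Laurent_affine xi (sp r) 0 hL.
  by rewrite evT0 addr0.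
have [pf hpf] := choice hfl1.
pose y r := evT (sp r) * xi - evT (pf r).
have hfl2 : forall r, exists g, absv (t ^+ N * y r - evT g) < 1.
  move=> r; apply: floor_ex.
  have -> : t ^+ N * y r = evT ('X^N * sp r) * xi + evT (- ('X^N * pf r)).
    by rewrite /y evTN !evTM evTXn; ring.
  exact: Laurent_affine.
have [gf hgf] := choice hfl2.
have hqN : 0 < q ^+ N by rewrite exprn_gt0 // q_gt0.
have hqN1 : 1 <= q ^+ N by rewrite exprn_ege1 // ltW // q_gt1.
have hsize : forall r, (size (gf r) <= N)%N.
  move=> r; have hy : absv (y r) < 1 := hpf r.
  have hlt : absT (R:=R) (gf r) < q ^+ N.
    rewrite -abs_evT.
    have -> : evT (gf r) = t ^+ N * y r + - (t ^+ N * y r - evT (gf r)) by ring.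
    apply: abs_lt_add; last by rewrite absN; apply: lt_le_trans (hgf r) hqN1.
    by rewrite absM absX abs_t -[X in _ < X]mulr1 ltr_pM2l.
  move: hlt; rewrite /absT; case: eqP => [->|_]; first by rewrite size_poly0.
  rewrite ltr_eXn2l ?q_gt1 // -!subn1; lia.
pose phi (r : 'rV[F]_N.+1) : 'rV[F]_N := \row_(i < N) (gf r)`_i.
have hni : ~ injective phi.
  move=> hinj; have := leq_card phi hinj; rewrite !card_mx !mul1n leqNgt.
  by rewrite ltn_exp2l ?ltnSn // card_finNzRing_gt1.
have [r1 [r2 [hne heq]]] : exists r1 r2, r1 != r2 /\ phi r1 = phi r2.
  case: (pselect (exists r1 r2, r1 != r2 /\ phi r1 = phi r2)) => [hh|hno]; first exact: hh.
  exfalso; apply: hni => r1 r2 h; apply/eqP; apply/negP => hn; apply: hno.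
  by exists r1, r2; split => //; apply/negP.
have hg : gf r1 = gf r2.
  apply/polyP => i; case: (ltnP i N) => hi.
    by have := congr1 (fun m : 'rV[F]_N => m ord0 (Ordinal hi)) heq; rewrite /phi !mxE.
  by rewrite !nth_default // (leq_trans (hsize _) hi).
exists (sp r1 - sp r2), (pf r1 - pf r2).
have hkey : evT (sp r1 - sp r2) * xi - evT (pf r1 - pf r2) = y r1 - y r2.
  by rewrite /y !evTB; ring.
have hs0 : sp r1 - sp r2 != 0.
  apply: contra hne; rewrite subr_eq0 => /eqP h; apply/eqP/rowP => j.
  have := congr1 (fun p : {poly F} => p`_j) h; rewrite /sp !coef_poly ltn_ord.
  by rewrite inord_val.
have hts := evT_neq0 hs0.
have hdiff : absv (y r1 - y r2) < (q ^+ N)^-1.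
  have htN : t ^+ N != 0 by rewrite expf_neq0 // t_neq0.
  have -> : y r1 - y r2 = (t ^+ N)^-1 *
     ((t ^+ N * y r1 - evT (gf r1)) - (t ^+ N * y r2 - evT (gf r2))).
    by rewrite hg; field.
  rewrite absM absV absX abs_t -[X in _ < X]mulr1 ltr_pM2l ?invr_gt0 //.
  by apply: abs_lt_add; rewrite ?absN; apply: hgf.
have hsN : absT (R:=R) (sp r1 - sp r2) <= q ^+ N.
  apply: absT_le_size; apply: leq_trans (size_polyD _ _) _.
  by rewrite size_polyN geq_max !size_poly.
split => //.
- rewrite -abs_evT.
  have -> : evT (pf r1 - pf r2) = evT (sp r1 - sp r2) * xi + - (y r1 - y r2) by rewrite -hkey; ring.
  apply: abs_le_add.
    rewrite absM abs_evT; apply: ler_pM => //; [exact: absT_ge0|exact: abs_ge0|].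
    by rewrite le_max lexx orbT.
  rewrite absN; apply: (le_trans (ltW hdiff)); apply: (@le_trans _ _ 1).
    by rewrite invf_le1.
  have hM : 1 <= Num.max 1 (absv xi) by rewrite le_max lexx.
  have h1 : 0 <= (q ^+ N - 1) * (Num.max 1 (absv xi) - 1) by apply: mulr_ge0; lra.
  nra.
- rewrite hkey; apply: abs_gt0; rewrite -hkey subr_eq0; apply/eqP => h; apply: hQ.
  exists (pf r1 - pf r2), (sp r1 - sp r2); split => //.
  by rewrite -h; field.
- by rewrite hkey.
Qed.


Lemma powR_anti (H1 H2 x : R) : 0 < H1 -> H1 <= H2 -> x <= 0 -> H2 `^ x <= H1 `^ x.
Proof.
move=> h1 h12 hx; rewrite !powRE //; last exact: lt_le_trans h12.
rewrite ler_expR; apply: ler_wnM2l => //.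
by rewrite ler_ln // posrE //; exact: lt_le_trans h12.
Qed.

Lemma qexpE N : q ^+ N = expR (N%:R * ln q).
Proof. by rewrite mulr_natl -lnXn ?q_gt0 // lnK // posrE exprn_gt0 // q_gt0. Qed.

Lemma absT_opp (p : {poly F}) : absT (R:=R) (- p) = absT p.
Proof. by rewrite /absT oppr_eq0 size_polyN. Qed.

Lemma w2_ge1 xi : in_Laurent iF t absv xi -> ~ in_FqT iF t xi ->
  (1%:E <= w2 iF t absv xi)%E.
Proof.
move=> hL hQ; rewrite /w2; apply: (@sup_ge 1 _ 0); first by lra.
move=> w hw0 hw1.
pose M := Num.max 1 (absv xi).
have hM1 : 1 <= M by rewrite le_max lexx.
have hM0 : 0 < M by lra.
have hlnM : 0 <= ln M by apply: ln_ge0.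
have hlnq : 0 < ln q by apply: ln_gt0; exact: q_gt1.
apply: (@infinite_by2 _ _ (fun P => absv (evP iF t P xi))) => e he.
pose K := Num.max (ln M / ((1 - w) * ln q)) (- ln e / ln q).
have [N hN] : exists N : nat, K < N%:R.
  exists (Num.truncn K).+1; apply: real_truncnS_gt; exact: num_real.
have hK1 : ln M / ((1 - w) * ln q) < N%:R by apply: le_lt_trans hN; rewrite le_max lexx.
have hK2 : - ln e / ln q < N%:R by apply: le_lt_trans hN; rewrite le_max lexx orbT.
have [s [p [hs0 hsN hpN hpos hlt]]] := dirichlet _ N hL hQ.
have hq0 : 0 < q ^+ N by rewrite exprn_gt0 // q_gt0.
pose P := s%:P * 'X + (- p)%:P.
have [c0 c1 c2] := linP_coef s (- p).
have hsP : size P = 2%N by apply: linP_size.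
have hev : evP iF t P xi = evT s * xi - evT p.
  by rewrite evP_expand ?hsP // c0 c1 c2 // evT0 mul0r addr0 evTN addrC.
exists P; split; last by split; rewrite hev //; apply: (lt_trans hlt); rewrite qexpE -expRN -[e]lnK ?posrE // ltr_expR; move: hK2; rewrite ltr_pdivrMr //; lra.
- split; first by rewrite hsP.
  rewrite /= hev; split => //.
  have hH1 : 1 <= height (R:=R) P.
    by apply: le_trans (absT_ge1 hs0) _; rewrite -c1; exact: coef_le_height.
  have hHM : height (R:=R) P <= q ^+ N * M.
    apply: height_le; first by apply: mulr_ge0; lra.
    move=> [|[|i]].
    + by rewrite c0 absT_opp.
    + rewrite c1; apply: le_trans hsN _; rewrite ler_peMr //; lra.
    + rewrite c2 // /absT eqxx; apply: mulr_ge0; lra.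
  have hH0 : 0 < height (R:=R) P by lra.
  have hw : - w <= 0 by lra.
  apply: (le_trans (ltW hlt)); apply: (le_trans _ (powR_anti _ _ _ hH0 hHM hw)).
  rewrite powRE; last by apply: mulr_gt0.
  rewrite qexpE -expRN ler_expR lnM ?posrE ?expR_gt0 // expRK.
  have h3 : ln M <= N%:R * ((1 - w) * ln q).
    by rewrite -ler_pdivrMr ?ltW //; apply: mulr_gt0; lra.
  nra.
Qed.


Lemma lead2_neq0 (Q : {poly {poly F}}) : size Q = 3%N -> Q`_2 != 0.
Proof. by move=> hs; rewrite -[2%N]/((3%N).-1) -hs -lead_coefE lead_coef_eq0 -size_poly_eq0 hs. Qed.

Lemma vieta_P (Q : {poly {poly F}}) al al' : size Q = 3%N -> al != al' ->
  evP iF t Q al = 0 -> evP iF t Q al' = 0 ->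
  (forall x, evP iF t Q x = evT Q`_2 * (x - al) * (x - al')) /\
  1 <= (absv (evT Q`_2) * absv (al - al')) ^+ 2.
Proof.
move=> hs hne e1 e2.
rewrite !evP_expand ?hs // in e1 e2.
have [hB hC] := vieta _ _ _ _ _ hne e1 e2.
have hA := evT_neq0 (lead2_neq0 _ hs).
split.
  by move=> x; rewrite evP_expand ?hs // hB hC; ring.
pose c := Q`_2 * Q`_0.
pose D := Q`_1 * Q`_1 - (c + c + c + c).
have hD : evT D = (evT Q`_2 * (al - al')) ^+ 2.
  by rewrite /D /c evTB !evTD !evTM hB hC; ring.
have hD0 : D != 0.
  apply/eqP => h; move: hD; rewrite h evT0 => /esym/eqP.
  by rewrite expf_eq0 /= mulf_eq0 (negPf hA) subr_eq0 (negPf hne).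
by rewrite -absM -absX -hD abs_evT; apply: absT_ge1.
Qed.

Lemma conv_exp (y H : R) : 0 < y -> 1 < H -> y = expR (- (- ln y / ln H) * ln H).
Proof.
move=> hy hH; have hl : ln H != 0 by rewrite gt_eqF // ln_gt0.
by rewrite mulNr divfK // opprK lnK.
Qed.


Lemma main_lemma (xi : L) (hxiK : in_Laurent iF t absv xi) (hxi : ~ in_FqT iF t xi)
  (alpha alpha' : nat -> L) (P : nat -> {poly {poly F}})
  (hmin : forall j, is_minpoly iF t (alpha j) (P j))
  (hdeg : forall j, size (P j) = 3%N)
  (hconj : forall j, evP iF t (P j) (alpha' j) = 0 /\ alpha' j != alpha j)
  (hne : forall j, xi != alpha j)
  (hdiv : (fun j => height (P j) : R) @ \oo --> +oo)
  (g1 g2 : R)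
  (hg1 : (fun j => - ln (absv (xi - alpha j)) / ln (height (P j) : R)) @ \oo --> g1)
  (hg2 : (fun j => - ln (absv (alpha j - alpha' j)) / ln (height (P j) : R)) @ \oo --> g2) :
  ((g1 - 1)%:E <= w2star iF t absv xi)%E /\
  ((g1 + g2 - 1)%:E <= w2 iF t absv xi)%E.
Proof.
move/cvgryPgt: hdiv => hH.
set H := fun j => height (R:=R) (P j).
set r1 := fun j => - ln (absv (xi - alpha j)) / ln (H j).
set r2 := fun j => - ln (absv (alpha j - alpha' j)) / ln (H j).
have hy1 : forall j, 0 < absv (xi - alpha j) by move=> j; apply: abs_gt0; rewrite subr_eq0.
have hy2 : forall j, 0 < absv (alpha j - alpha' j).
  by move=> j; apply: abs_gt0; rewrite subr_eq0 eq_sym; case: (hconj j).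
have hroot : forall j, evP iF t (P j) (alpha j) = 0 by move=> j; case: (hmin j).
have hvi : forall j, (forall x, evP iF t (P j) x = evT (P j)`_2 * (x - alpha j) * (x - alpha' j)) /\
    1 <= (absv (evT (P j)`_2) * absv (alpha j - alpha' j)) ^+ 2.
  move=> j; have [e2 hn] := hconj j.
  by apply: vieta_P => //; rewrite eq_sym.
have hAH : forall j, absv (evT (P j)`_2) <= H j by move=> j; rewrite abs_evT; apply: coef_le_height.
split.
- case: (lerP g1 0) => hg1p.
    apply: le_trans (w2star_ge_m1 _ hxiK hxi); rewrite lee_fin; lra.
  rewrite /w2star; apply: (@sup_ge _ _ (Num.max (-1) (g1 - 2))).
    by rewrite gt_max; apply/andP; split; lra.
  move=> w; rewrite gt_max => /andP[hw0 hw0'] hw1.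
  pose c := w + 1.
  have hc : 0 < c by rewrite /c; lra.
  apply: (@infinite_by2 _ _ (fun a => absv (xi - a))) => e he.
  have [Me [hMe hMe2]] := small_pow _ _ hc he.
  have ev1 := hH 1; have ev2 := hH Me.
  have ev3 : \forall j \near \oo, c < r1 j by apply: cvgr_gt hg1 _ _; rewrite /c; lra.
  have [j [h1 [h2 h3]]] := filter_ex (filterI ev1 (filterI ev2 ev3)).
  rewrite /= -/(H j) in h1 h2 h3.
  have hyj := conv_exp _ _ (hy1 j) h1.
  have hHj0 : 0 < H j by lra.
  have hle : absv (xi - alpha j) <= H j `^ (- c).
    rewrite [X in X <= _]hyj powRE // ler_expR; apply: ler_wpM2r.
      by apply: ltW; apply: ln_gt0.
    by rewrite lerN2; apply: ltW.
  exists (alpha j); split; last split.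
  + exists (P j); split => //; split; first by rewrite hdeg.
    split; first exact: hy1.
    by move: hle; rewrite /c opprD.
  + exact: hy1.
  + exact: le_lt_trans hle (hMe2 _ h2).
- have hg2le : g2 <= 1.
    rewrite leNgt; apply/negP => hg2p.
    have ev1 := hH 1.
    have ev3 : \forall j \near \oo, 1 < r2 j by apply: cvgr_gt hg2 _ _.
    have [j [h1 h3]] := filter_ex (filterI ev1 ev3).
    rewrite /= -/(H j) in h1 h3.
    have hyj := conv_exp _ _ (hy2 j) h1.
    have hl : 0 < ln (H j) by apply: ln_gt0.
    have hlt : absv (alpha j - alpha' j) < (H j)^-1.
      rewrite [X in X < _]hyj -[H j in X in _ < X]lnK ?posrE; last by lra.
      rewrite -expRN ltr_expR -/(r2 j); nra.
    have [_ hd] := hvi j; have hA := hAH j.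
    have hA0 := abs_ge0 (evT (P j)`_2).
    have hz0 := hy2 j.
    have hH0 : 0 < H j by lra.
    have : absv (evT (P j)`_2) * absv (alpha j - alpha' j) < 1.
      apply: (@le_lt_trans _ _ (H j * absv (alpha j - alpha' j))).
        by apply: ler_wpM2r => //; apply: ltW.
      by rewrite -(ltr_pM2l hH0) in hlt; move: hlt; rewrite mulfV ?gt_eqF.
    move: hd; set z := _ * _ => hd hz.
    have hz00 : 0 <= z by rewrite /z; apply: mulr_ge0 => //; apply: ltW.
    nra.
  case: (lerP (g1 + g2 - 1) 1) => hsum.
    apply: le_trans (w2_ge1 _ hxiK hxi); by rewrite lee_fin.
  have hg12 : g2 < g1 by lra.
  rewrite /w2; apply: (@sup_ge _ _ 1) => // w hw0 hw1.
  pose d := Num.min ((g1 + g2 - 1 - w) / 2) ((g1 - g2) / 4).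
  have hd0 : 0 < d by rewrite lt_min; apply/andP; split; lra.
  have hd1 : d <= (g1 + g2 - 1 - w) / 2 by rewrite ge_min lexx.
  have hd2 : d <= (g1 - g2) / 4 by rewrite ge_min lexx orbT.
  have hw : 0 < w by lra.
  apply: (@infinite_by2 _ _ (fun Q => absv (evP iF t Q xi))) => e he.
  have [Me [hMe hMe2]] := small_pow _ _ hw he.
  have ev1 := hH 1; have ev2 := hH Me.
  have ev3 : \forall j \near \oo, g1 - d < r1 j by apply: cvgr_gt hg1 _ _; lra.
  have ev4 : \forall j \near \oo, g2 - d < r2 j by apply: cvgr_gt hg2 _ _; lra.
  have ev5 : \forall j \near \oo, r2 j < g2 + d by apply: cvgr_lt hg2 _ _; lra.
  have [j [h1 [h2 [h3 [h4 h5]]]]] :=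
    filter_ex (filterI ev1 (filterI ev2 (filterI ev3 (filterI ev4 ev5)))).
  rewrite /= -/(H j) in h1 h2 h3 h4 h5.
  have hl : 0 < ln (H j) by apply: ln_gt0.
  have hH0 : 0 < H j by lra.
  have hyj1 := conv_exp _ _ (hy1 j) h1.
  have hyj2 := conv_exp _ _ (hy2 j) h1.
  have hr12 : r2 j < r1 j by lra.
  have hlt12 : absv (xi - alpha j) < absv (alpha j - alpha' j).
    rewrite hyj1 hyj2 ltr_expR ltr_pM2r //; by rewrite ltrN2.
  have hxa' : absv (xi - alpha' j) = absv (alpha j - alpha' j).
    by rewrite -(abs_strict _ _ hlt12) addrA subrK.
  have [hvx _] := hvi j.
  have hA0 : 0 < absv (evT (P j)`_2) by apply: abs_gt0; apply: evT_neq0; apply: lead2_neq0.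
  have hval : absv (evP iF t (P j) xi) = absv (evT (P j)`_2) * absv (xi - alpha j) * absv (alpha j - alpha' j).
    by rewrite hvx !absM hxa'.
  have hpos : 0 < absv (evP iF t (P j) xi) by rewrite hval; apply: mulr_gt0 => //; apply: mulr_gt0.
  have hle : absv (evP iF t (P j) xi) <= H j `^ (- w).
    rewrite hval powRE //.
    have hHe : H j = expR (ln (H j)) by rewrite lnK // posrE.
    apply: (@le_trans _ _ (H j * absv (xi - alpha j) * absv (alpha j - alpha' j))).
      by rewrite ler_wpM2r ?ler_wpM2r //; apply: ltW.
    rewrite [X in X * _ * _]hHe hyj1 hyj2 -!expRD ler_expR.
    rewrite -/(r1 j) -/(r2 j) -/(H j).
    have hsum2 : w + 1 <= r1 j + r2 j by lra.
    nra.
  exists (P j); split; last by split => //; apply: le_lt_trans hle (hMe2 _ h2).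
  by split; [rewrite hdeg | split].
Qed.

End Basics.

Theorem lemma4p12 (F : finFieldType) (L : closedFieldType) (R : realType)
  (iF : {rmorphism F -> L}) (t : L) (absv : L -> R)
  (habs : is_abs_value iF t absv) (htr : transcendental_T iF t)
  (xi : L) (hxiK : in_Laurent iF t absv xi) (hxi : ~ in_FqT iF t xi)
  (alpha alpha' : nat -> L) (P : nat -> {poly {poly F}})
  (hmin : forall j, is_minpoly iF t (alpha j) (P j))
  (hdeg : forall j, size (P j) = 3%N)
  (hconj : forall j, evP iF t (P j) (alpha' j) = 0 /\ alpha' j != alpha j)
  (hne : forall j, xi != alpha j)
  (hincr : forall j, (height (P j) : R) < height (P j.+1))
  (hdiv : (fun j => height (P j) : R) @ \oo --> +oo)
  (g1 g2 : R)
  (hg1 : (fun j => - ln (absv (xi - alpha j)) / ln (height (P j) : R)) @ \oo --> g1)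
  (hg2 : (fun j => - ln (absv (alpha j - alpha' j)) / ln (height (P j) : R)) @ \oo --> g2) :
  ((g1 - 1)%:E <= w2star iF t absv xi)%E /\
  ((g1 + g2 - 1)%:E <= w2 iF t absv xi)%E.
Proof.
exact: (@main_lemma F L R iF t absv habs htr xi hxiK hxi alpha alpha' P hmin hdeg hconj hne hdiv g1 g2 hg1 hg2).
Qed.
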